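(* Let $\mathcal{C}\subsetneq\mathbb{F}_2^n$ be a linear code that is $(\Delta,s)$-locally testable with respect to a $\Delta$-limited parity-check matrix $H$ of size $m\times n$ with $n/2\le m\le n$, and let $\mathbf{0}_t\subseteq\mathbb{F}_2^t$ be the zero code of length $t$. Then the code $\mathcal{C}':=\mathcal{C}\oplus\mathbf{0}_t\subseteq\mathbb{F}_2^{n+t}$ is $(\Delta,s')$-locally testable with respect to a $\Delta$-limited parity-check matrix, where $s':=\min(s/2,1)$.
   Context: A linear code $\mathcal{C}\subseteq\mathbb{F}_q^n$ is $(\Delta,s)$-locally testable with respect to a parity-check matrix $H\in\mathbb{F}_q^{m\times n}$ ($\ker H=\mathcal{C}$) if every row of $H$ has at most $\Delta$ nonzero entries and $\frac1m|Hx|\ge\frac sn d(x,\mathcal{C})$ for all $x\in\mathbb{F}_q^n$ ($|\cdot|$ Hamming weight, $d(x,\mathcal{C})$ Hamming distance to the code). A matrix is $\Delta$-limited if every row and column has at most $\Delta$ nonzero entries. $\mathcal{C}\oplus\mathbf{0}_t=\{(c,0):c\in\mathcal{C}\}$. *)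

(* Defs.v *)
From HB Require Import structures.
From mathcomp Require Import all_boot all_order all_algebra.
Set Implicit Arguments. Unset Strict Implicit. Unset Printing Implicit Defensive.
Import Order.TTheory GRing.Theory Num.Theory.
Local Open Scope ring_scope.

Definition wt (F : fieldType) (n : nat) (v : 'cV[F]_n) : nat :=
  #|[set i : 'I_n | v i ord0 != 0]|.

(* Hamming distance of x to a code C (C is assumed non-empty where used;
   the default value n is never smaller than an actual distance). *)
Definition dist_code (F : finFieldType) (n : nat) (C : {set 'cV[F]_n}) (x : 'cV[F]_n) : nat :=
  \big[minn/n]_(c in C) wt (x - c).

Definition row_wt (F : fieldType) m n (H : 'M[F]_(m, n)) (i : 'I_m) : nat :=
  #|[set j : 'I_n | H i j != 0]|.
Definition col_wt (F : fieldType) m n (H : 'M[F]_(m, n)) (j : 'I_n) : nat :=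
  #|[set i : 'I_m | H i j != 0]|.

Definition parity_check (F : finFieldType) m n (H : 'M[F]_(m, n)) (C : {set 'cV[F]_n}) : Prop :=
  forall x : 'cV[F]_n, (x \in C) = (H *m x == 0).

Definition limited (F : fieldType) m n (D : nat) (H : 'M[F]_(m, n)) : Prop :=
  (forall i, (row_wt H i <= D)%N) /\ (forall j, (col_wt H j <= D)%N).

Definition locally_testable (R : realFieldType) (F : finFieldType) m n
    (C : {set 'cV[F]_n}) (H : 'M[F]_(m, n)) (D : nat) (s : R) : Prop :=
  parity_check H C /\
  (forall i, (row_wt H i <= D)%N) /\
  (forall x : 'cV[F]_n,
      (wt (H *m x))%:R / m%:R >= s / n%:R * (dist_code C x)%:R).

Definition pad_zero (F : finFieldType) n t (C : {set 'cV[F]_n}) : {set 'cV[F]_(n + t)} :=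
  [set col_mx c (0 : 'cV[F]_t) | c in C].

(* Main.v *)
Require Import Defs.
From HB Require Import structures.
From mathcomp Require Import all_boot all_order all_algebra.
From mathcomp Require Import ring lra.
Import Order.TTheory GRing.Theory Num.Theory.
Local Open Scope ring_scope.

Lemma wtE (F : fieldType) k (v : 'cV[F]_k) :
  wt v = (\sum_(i < k) (v i ord0 != 0%R))%N.
Proof.
rewrite /wt -sum1_card big_mkcond /=; apply: eq_bigr => i _.
by rewrite inE; case: (v i ord0 != 0).
Qed.

Lemma wt_col (F : fieldType) k l (u : 'cV[F]_k) (v : 'cV[F]_l) :
  wt (col_mx u v) = (wt u + wt v)%N.
Proof.
rewrite !wtE big_split_ord /=; congr (_ + _)%N; apply: eq_bigr => i _.
  by rewrite col_mxEu. by rewrite col_mxEd.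
Qed.

Lemma row_wtE (F : fieldType) p q (A : 'M[F]_(p, q)) i :
  row_wt A i = (\sum_(j < q) (A i j != 0%R))%N.
Proof.
rewrite /row_wt -sum1_card big_mkcond /=; apply: eq_bigr => j _.
by rewrite inE; case: (A i j != 0).
Qed.

Lemma col_wtE (F : fieldType) p q (A : 'M[F]_(p, q)) j :
  col_wt A j = (\sum_(i < p) (A i j != 0%R))%N.
Proof.
rewrite /col_wt -sum1_card big_mkcond /=; apply: eq_bigr => i _.
by rewrite inE; case: (A i j != 0).
Qed.

Lemma sum_id_row t (i : 'I_t) :
  (\sum_(j < t) (((1%:M : 'M['F_2]_t) i j) != 0%R))%N = 1%N.
Proof.
rewrite (bigD1 i) //= big1 => [|j /negbTE ji]; first by rewrite mxE eqxx.
by rewrite mxE (eq_sym i) ji.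
Qed.

Lemma sum_id_col t (j : 'I_t) :
  (\sum_(i < t) (((1%:M : 'M['F_2]_t) i j) != 0%R))%N = 1%N.
Proof.
rewrite (bigD1 j) //= big1 => [|i /negbTE ji]; first by rewrite mxE eqxx.
by rewrite mxE ji.
Qed.

Lemma sum_zero p : (\sum_(j < p) ((0 : 'F_2)%R != 0%R))%N = 0%N.
Proof. by rewrite big1. Qed.

Lemma bigmin_le (I : finType) (P : pred I) (F : I -> nat) k i :
  P i -> (\big[minn/k]_(j | P j) F j <= F i)%N.
Proof.
move=> Pi; rewrite -big_filter.
have : i \in filter P (index_enum I) by rewrite mem_filter Pi mem_index_enum.
elim: (filter P (index_enum I)) => [//|a l IH]; rewrite inE big_cons.
case/orP => [/eqP <-|/IH]; first exact: geq_minl.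
by move/(leq_trans (geq_minr _ _)).
Qed.

Lemma real_ineq (R : realFieldType) (s a b d e m n t : R) :
  0 < m -> m <= n -> n <= 2 * m -> 0 <= t -> 0 <= a -> 0 <= b -> 0 <= d ->
  0 <= e -> e <= d + b -> s / n * d <= a / m ->
  Num.min (s / 2) 1 / (n + t) * e <= (a + b) / (m + t).
Proof.
move=> m0 mn nm t0 a0 b0 d0 e0 ed hyp.
have n0 : 0 < n by lra.
have h1 : s * d * m <= a * n.
  have := hyp; rewrite -(ler_pM2r (mulr_gt0 n0 m0)).
  have -> : s / n * d * (n * m) = s * d * m by field; lra.
  have -> : a / m * (n * m) = a * n by field; lra.
  done.
set s' := Num.min (s / 2) 1.
have s1 : s' <= s / 2 by rewrite ge_min lexx.
have s2 : s' <= 1 by rewrite ge_min lexx orbT.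
have nt : 0 < n + t by lra.
have mt : 0 < m + t by lra.
rewrite ler_pdivlMr //.
have -> : s' / (n + t) * e * (m + t) = (s' * e * (m + t)) / (n + t) by field; lra.
rewrite ler_pdivrMr //.
have [sneg|spos] := lerP s' 0.
  have : s' * e <= 0 by nra.
  move=> h; have : 0 <= (a + b) * (n + t) by nra.
  nra.
have h2 : s' * b * (m + t) <= b * (n + t).
  have p1 : 0 <= (1 - s') * (b * (m + t)) by apply: mulr_ge0; nra.
  have p2 : 0 <= b * (n - m) by apply: mulr_ge0; lra.
  nra.
have h3 : n * (s' * d * (m + t)) <= n * (a * (n + t)).
  have q1 : 0 <= (s / 2 - s') * (n * d * (m + t)).
    apply: mulr_ge0; first lra.
    apply: mulr_ge0; [apply: mulr_ge0|]; lra.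
  have sd : 0 <= s * d by apply: mulr_ge0; lra.
  have q2 : 0 <= (s * d) * (2 * m * (n + t) - n * (m + t)).
    apply: mulr_ge0 => //.
    have : n * t <= 2 * m * t by apply: ler_wpM2r; lra.
    have : 0 <= m * n by apply: mulr_ge0; lra.
    nra.
  have q3 : (s * d * m) * (n + t) <= (a * n) * (n + t) by apply: ler_wpM2r; lra.
  nra.
have h5 : s' * d * (m + t) <= a * (n + t) by rewrite -(ler_pM2l n0).
have h6 : s' * e * (m + t) <= s' * (d + b) * (m + t).
  have : 0 <= (d + b - e) * (s' * (m + t)) by apply: mulr_ge0; nra.
  nra.
nra.
Qed.

Theorem lemma13 (R : realFieldType) (n m t D : nat) (s : R)
    (C : {set 'cV['F_2]_n}) (H : 'M['F_2]_(m, n)) :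
  C != [set: 'cV['F_2]_n] ->
  locally_testable C H D s ->
  limited D H ->
  (n <= 2 * m)%N -> (m <= n)%N ->
  exists (m' : nat) (H' : 'M['F_2]_(m', n + t)),
    limited D H' /\
    locally_testable (pad_zero t C) H' D (Num.min (s / 2) 1).
Proof.
move=> CnT [pc [rw sound]] [rwl cwl] nm mn.
have [x0 _ x0C] : exists2 x, x \in [set: 'cV['F_2]_n] & x \notin C.
  by apply/subsetPn; apply: contra CnT => sub; rewrite eqEsubset subsetT sub.
have Hx0 : H *m x0 != 0 by rewrite -pc.
have : [exists i, exists j, H i j != 0].
  apply: contraR Hx0 => /existsPn Hz; apply/eqP.
  suff -> : H = 0 by rewrite mul0mx.
  apply/matrixP => i j; move/existsPn: (Hz i) => /(_ j); rewrite negbK => /eqP ->.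
  by rewrite mxE.
case/existsP => i0 /existsP [j0 Hij].
have D1 : (1 <= D)%N.
  apply: leq_trans (rw i0); rewrite /row_wt card_gt0; apply/set0Pn; exists j0.
  by rewrite inE.
have m0 : (0 < m)%N by case: (i0) => k; apply: leq_ltn_trans.
have n0 : (0 < n)%N by apply: leq_trans mn.
pose H' := block_mx H (0 : 'M['F_2]_(m, t)) (0 : 'M['F_2]_(t, n)) (1%:M : 'M['F_2]_t).
have rw' : forall i, (row_wt H' i <= D)%N.
  move=> i; rewrite row_wtE big_split_ord /=.
  case: (split_ordP i) => k ->.
    under eq_bigr do rewrite block_mxEul.
    under [X in (_ + X)%N]eq_bigr do rewrite block_mxEur mxE.
    by rewrite sum_zero addn0 -row_wtE.
  under eq_bigr do rewrite block_mxEdl mxE.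
  under [X in (_ + X)%N]eq_bigr do rewrite block_mxEdr.
  by rewrite sum_zero add0n sum_id_row.
have cw' : forall j, (col_wt H' j <= D)%N.
  move=> j; rewrite col_wtE big_split_ord /=.
  case: (split_ordP j) => k ->.
    under eq_bigr do rewrite block_mxEul.
    under [X in (_ + X)%N]eq_bigr do rewrite block_mxEdl mxE.
    by rewrite sum_zero addn0 -col_wtE.
  under eq_bigr do rewrite block_mxEur mxE.
  under [X in (_ + X)%N]eq_bigr do rewrite block_mxEdr.
  by rewrite sum_zero add0n sum_id_col.
have mulH' : forall (x : 'cV['F_2]_n) (y : 'cV['F_2]_t), H' *m col_mx x y = col_mx (H *m x) y.
  by move=> x y; rewrite /H' mul_block_col !mul0mx addr0 add0r mul1mx.
exists (m + t)%N; exists H'; split; first by [].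
split; last split => //.
  move=> z; rewrite -(vsubmxK z) mulH' col_mx_eq0.
  apply/imsetP/andP => [[c cC /eq_col_mx [-> ->]]|[xC /eqP yE]].
    by rewrite -pc cC eqxx.
  by exists (usubmx z); rewrite ?pc // yE.
move=> z; rewrite -(vsubmxK z) mulH'.
set x := usubmx z; set y := dsubmx z.
have wtn : forall v : 'cV['F_2]_n, (wt v <= n)%N.
  by move=> v; rewrite /wt; apply: leq_trans (max_card _) _; rewrite card_ord.
have C0 : (0 : 'cV['F_2]_n) \in C by rewrite pc mulmx0.
have distle : forall c, c \in C ->
    (dist_code (pad_zero t C) (col_mx x y) <= wt (x - c) + wt y)%N.
  move=> c cC; rewrite /dist_code.
  apply: leq_trans (@bigmin_le _ _ _ _ (col_mx c 0) _) _.
    by apply/imsetP; exists c.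
  by rewrite opp_col_mx add_col_mx subr0 wt_col.
have dle : (dist_code (pad_zero t C) (col_mx x y) <= dist_code C x + wt y)%N.
  have : (dist_code C x == n) || [exists c in C, dist_code C x == wt (x - c)].
    rewrite /dist_code; apply: (big_ind (fun v => (v == n) || [exists c in C, v == wt (x - c)])).
    - by rewrite eqxx.
    - move=> a b Ha Hb; case: (leqP a b) => ab.
        by [].
      by [].
    - by move=> c cC; apply/orP; right; apply/existsP; exists c; rewrite cC eqxx.
  case/orP => [/eqP -> | /existsP [c /andP [cC /eqP ->]]]; last exact: distle.
  apply: leq_trans (distle _ C0) _; rewrite subr0 leq_add2r; exact: wtn.
rewrite wt_col !natrD.
apply: (@real_ineq _ _ _ _ (dist_code C x)%:R); rewrite ?ler0n ?ltr0n //.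
- by rewrite ler_nat.
- by rewrite -natrM ler_nat.
- by rewrite -natrD ler_nat.
Qed.
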